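(* In the social learning model, suppose the left tail of $G_-$ is convex and differentiable. Then there exists a positive integer $z$ such that for all $t\ge1$ and $s\ge1$: if $a_t=a_{t+1}=\cdots=a_{t+s-1}=+1$, then $\ell_{t+s}\ge \ell^*_{s-z}$.
   Context: Social learning model. A state $\theta\in\{-1,+1\}$ is drawn with $\mathbb{P}(\theta=+1)=\mathbb{P}(\theta=-1)=1/2$. Agents $t=1,2,\dots$ receive private signals $s_t\in\mathbb{R}$ that are i.i.d. conditionally on $\theta$, with CDF $F_+$ if $\theta=+1$ and $F_-$ if $\theta=-1$; $F_+$ and $F_-$ are mutually absolutely continuous. Let $L_t=\log\frac{\mathbb{P}(\theta=+1\mid s_t)}{\mathbb{P}(\theta=-1\mid s_t)}$ be the private log-likelihood ratio, and let $G_+$, $G_-$ denote the CDFs of $L_t$ conditional on $\theta=+1$, $\theta=-1$ respectively. Signals are assumed unbounded: for every $M\in\mathbb{R}$, $\mathbb{P}(L_t>M)>0$ and $\mathbb{P}(L_t<-M)>0$. Agent $t$ observes $a_1,\dots,a_{t-1}$ and her own signal and chooses $a_t\in\{-1,+1\}$ (utility $1$ if $a_t=\theta$, else $0$). The public belief is $\mu_t=\mathbb{P}(\theta=+1\mid a_1,\dots,a_{t-1})$ and $\ell_t=\log\frac{\mu_t}{1-\mu_t}$ (so $\ell_1=0$). In equilibrium $a_t=+1$ iff $\ell_t+L_t>0$, and otherwise $a_t=-1$. Consequently $\ell_{t+1}=\ell_t+D_+(\ell_t)$ if $a_t=+1$ and $\ell_{t+1}=\ell_t+D_-(\ell_t)$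 if $a_t=-1$, where $D_+(x)=\log\frac{1-G_+(-x)}{1-G_-(-x)}$ and $D_-(x)=\log\frac{G_+(-x)}{G_-(-x)}$. We write $\mathbb{P}_+(\cdot)=\mathbb{P}(\cdot\mid\theta=+1)$ and $\mathbb{E}_+$ for the corresponding expectation. ''The left tail of $G_-$ is convex and differentiable'' means: there exists $x_0\in\mathbb{R}$ such that the restriction of $G_-$ to $(-\infty,x_0)$ is convex and differentiable. $\ell^*_t$ denotes the value of $\ell_t$ on the event $a_1=\cdots=a_{t-1}=+1$, i.e., $\ell^*_1=0$ and $\ell^*_{t+1}=\ell^*_t+D_+(\ell^*_t)$; by convention $\ell^*_j=0$ for integers $j\le 1$. *)

(* Defs.v *)
From Stdlib Require Import Reals Lra Lia.
Open Scope R_scope.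

Definition is_cdf (G : R -> R) : Prop :=
  (forall x y, x <= y -> G x <= G y) /\
  (forall x, forall eps, eps > 0 -> exists delta, delta > 0 /\
       forall y, x <= y < x + delta -> G y - G x < eps) /\
  (forall eps, eps > 0 -> exists M, forall x, x <= - M -> G x < eps) /\
  (forall eps, eps > 0 -> exists M, forall x, x >= M -> 1 - G x < eps).

(** [Gp], [Gm] are the conditional CDFs (given theta=+1 / theta=-1) of the
    private log-likelihood ratio L = log (P(theta=+1|s)/P(theta=-1|s))
    (uniform prior): equivalently dGp(u) = e^u dGm(u), i.e. for every interval
    (a,b], the Gp-mass lies between e^a and e^b times the Gm-mass. *)
Definition llr_pair (Gp Gm : R -> R) : Prop :=
  forall a b, a < b ->
    exp a * (Gm b - Gm a) <= Gp b - Gp a /\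
    Gp b - Gp a <= exp b * (Gm b - Gm a).

(** Unbounded signals: for every M, P(L > M) > 0 and P(L < -M) > 0, where
    P = (P_+ + P_-)/2.  (P(L< -M)>0 for all M is equivalent to P(L <= -M)>0
    for all M.) *)
Definition unbounded_signals (Gp Gm : R -> R) : Prop :=
  forall M, ((1 - Gp M) + (1 - Gm M)) / 2 > 0 /\ (Gp (- M) + Gm (- M)) / 2 > 0.

Definition left_tail_convex_differentiable (G : R -> R) : Prop :=
  exists x0 : R,
    (forall x y lam, x < x0 -> y < x0 -> 0 <= lam <= 1 ->
       G (lam * x + (1 - lam) * y) <= lam * G x + (1 - lam) * G y) /\
    (forall x, x < x0 -> exists l, derivable_pt_lim G x l).

Definition Dplus (Gp Gm : R -> R) (x : R) : R :=
  ln ((1 - Gp (- x)) / (1 - Gm (- x))).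
Definition Dminus (Gp Gm : R -> R) (x : R) : R :=
  ln (Gp (- x) / Gm (- x)).

(** Action sequence: [a t = true] means a_t = +1, [false] means a_t = -1
    (index 0 unused; agents are t = 1, 2, ...).
    [ell_aux a n] is ell_{n+1}. *)
Fixpoint ell_aux (Gp Gm : R -> R) (a : nat -> bool) (n : nat) : R :=
  match n with
  | O => 0
  | S m => let l := ell_aux Gp Gm a m in
           l + (if a (S m) then Dplus Gp Gm l else Dminus Gp Gm l)
  end.

(** Public log-likelihood ratio ell_t (for t >= 1; ell_1 = 0). *)
Definition ell (Gp Gm : R -> R) (a : nat -> bool) (t : nat) : R :=
  ell_aux Gp Gm a (t - 1).

(** ell*_j : value of ell_j when all previous actions are +1;
    equals 0 for j <= 1 (for negative integer indices, pass 0 — natural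
    subtraction truncates to 0, consistent with the convention ell*_j = 0). *)
Definition ell_star (Gp Gm : R -> R) (j : nat) : R :=
  ell Gp Gm (fun _ => true) j.

(* Main.v *)
Require Import Defs.
From Stdlib Require Import Reals Lra Lia.
Open Scope R_scope.

Lemma ln_le' x y : 0 < x -> x <= y -> ln x <= ln y.
Proof. intros Hx Hxy; destruct (Rle_lt_or_eq_dec _ _ Hxy) as [H|H].
- left; apply ln_increasing; auto.
- subst; lra. Qed.

Lemma exp_le' x y : x <= y -> exp x <= exp y.
Proof. intros Hxy; destruct (Rle_lt_or_eq_dec _ _ Hxy) as [H|H].
- left; apply exp_increasing; auto.
- subst; lra. Qed.

Lemma ln_div' x y : 0 < x -> 0 < y -> ln (x / y) = ln x - ln y.
Proof. intros; unfold Rdiv; rewrite ln_mult, ln_Rinv; try lra.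
  apply Rinv_0_lt_compat; auto. Qed.

Lemma ln_le_m1 y : 0 < y -> ln y <= y - 1.
Proof. intros H. rewrite <- (ln_exp (y-1)). apply ln_le'; auto.
  pose proof (exp_ineq1_le (y-1)); lra. Qed.

Lemma ratio_ge A B c : 0 < B -> c * B <= A -> c <= A / B.
Proof. intros HB H. replace c with ((c*B)/B) by (field; lra).
  unfold Rdiv; apply Rmult_le_compat_r; auto. left; apply Rinv_0_lt_compat; auto. Qed.

Lemma ratio_le A B c : 0 < B -> A <= c * B -> A / B <= c.
Proof. intros HB H. replace c with ((c*B)/B) by (field; lra).
  unfold Rdiv; apply Rmult_le_compat_r; auto. left; apply Rinv_0_lt_compat; auto. Qed.

Lemma cdf_le1 G H : is_cdf G -> is_cdf H ->
  (forall M, (1 - G M) + (1 - H M) > 0) -> forall x, G x <= 1.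
Proof.
  intros [Gm _] [_ [_ [_ Hu]]] Hs x.
  destruct (Rle_lt_dec (G x) 1) as [h|h]; auto.
  destruct (Hu (G x - 1)) as [M HM]; [lra|].
  set (y := Rmax x M).
  assert (G x <= G y) by (apply Gm; apply Rmax_l).
  assert (1 - H y < G x - 1) by (apply HM; unfold y; pose proof (Rmax_r x M); lra).
  specialize (Hs y); lra.
Qed.

Lemma cdf_ge0 G H : is_cdf G -> is_cdf H ->
  (forall M, G (-M) + H (-M) > 0) -> forall x, 0 <= G x.
Proof.
  intros [Gm _] [_ [_ [Hl _]]] Hs x.
  destruct (Rle_lt_dec 0 (G x)) as [h|h]; auto.
  destruct (Hl (- G x)) as [M HM]; [lra|].
  set (y := Rmin x (-M)).
  assert (G y <= G x) by (apply Gm; apply Rmin_l).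
  assert (H y < - G x) by (apply HM; unfold y; apply Rmin_r).
  specialize (Hs (-y)); rewrite Ropp_involutive in Hs; lra.
Qed.

Section S.
Variables (Gp Gm : R -> R).
Hypotheses (HGp : is_cdf Gp) (HGm : is_cdf Gm) (Hllr : llr_pair Gp Gm) (Hunb : unbounded_signals Gp Gm).

Lemma Gp1 x : Gp x <= 1.
Proof. apply (cdf_le1 Gp Gm); auto. intros M; destruct (Hunb M); lra. Qed.
Lemma Gm1 x : Gm x <= 1.
Proof. apply (cdf_le1 Gm Gp); auto. intros M; destruct (Hunb M); lra. Qed.
Lemma Gp0 x : 0 <= Gp x.
Proof. apply (cdf_ge0 Gp Gm); auto. intros M; destruct (Hunb M); lra. Qed.
Lemma Gm0 x : 0 <= Gm x.
Proof. apply (cdf_ge0 Gm Gp); auto. intros M; destruct (Hunb M); lra. Qed.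
Lemma Gpmono x y : x <= y -> Gp x <= Gp y.
Proof. destruct HGp as [h _]; auto. Qed.
Lemma Gmmono x y : x <= y -> Gm x <= Gm y.
Proof. destruct HGm as [h _]; auto. Qed.

Lemma L3 u : exp u * (1 - Gm u) <= 1 - Gp u.
Proof.
  pose proof (exp_pos u) as HE. set (E := exp u) in *.
  destruct (Rle_lt_dec (E * (1 - Gm u)) (1 - Gp u)) as [h|h]; auto.
  set (d := E * (1 - Gm u) - (1 - Gp u)).
  set (eps := d / (2*E)).
  assert (Heps : E * eps = d/2) by (unfold eps; field; lra).
  assert (eps > 0) by (unfold eps; apply Rdiv_lt_0_compat; unfold d; lra).
  destruct HGm as [_ [_ [_ Hu]]].
  destruct (Hu eps) as [M HM]; auto.
  set (b := Rmax (u+1) M).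
  assert (u < b) by (unfold b; pose proof (Rmax_l (u+1) M); lra).
  assert (1 - Gm b < eps) by (apply HM; unfold b; pose proof (Rmax_r (u+1) M); lra).
  destruct (Hllr u b) as [Hq _]; auto.
  pose proof (Gp1 b).
  assert (E * (1 - eps - Gm u) <= E * (Gm b - Gm u)) by (apply Rmult_le_compat_l; lra).
  assert (E * (1 - eps - Gm u) = E*(1 - Gm u) - E*eps) by ring.
  unfold d in *. fold E in Hq. lra.
Qed.

Lemma L4 u : Gp u <= exp u * Gm u.
Proof.
  pose proof (exp_pos u) as HE.
  destruct (Rle_lt_dec (Gp u) (exp u * Gm u)) as [h|h]; auto.
  set (d := Gp u - exp u * Gm u).
  destruct HGp as [_ [_ [Hl _]]].
  destruct (Hl d) as [M HM]; [unfold d; lra|].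
  set (a := Rmin (u-1) (-M)).
  assert (a < u) by (unfold a; pose proof (Rmin_l (u-1) (-M)); lra).
  assert (Gp a < d) by (apply HM; unfold a; apply Rmin_r).
  destruct (Hllr a u) as [_ Hq]; auto.
  pose proof (Gm0 a).
  assert (0 <= exp u * Gm a) by (apply Rmult_le_pos; lra).
  unfold d in *; lra.
Qed.

Lemma L5 u : Gp u <= Gm u.
Proof.
  destruct (Rle_lt_dec u 0) as [h|h].
  - pose proof (L4 u). assert (exp u <= 1) by (rewrite <- exp_0; apply exp_le'; auto).
    pose proof (Gm0 u).
    assert (exp u * Gm u <= 1 * Gm u) by (apply Rmult_le_compat_r; lra). lra.
  - pose proof (L3 u). assert (1 <= exp u) by (rewrite <- exp_0; apply exp_le'; lra).
    pose proof (Gm1 u).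
    assert (1 * (1 - Gm u) <= exp u * (1 - Gm u)) by (apply Rmult_le_compat_r; lra). lra.
Qed.

Lemma L6 u : 0 < 1 - Gm u.
Proof.
  destruct (Rle_lt_dec (1 - Gm u) 0) as [h|h]; auto. exfalso.
  pose proof (Gm1 u).
  assert (Gp u >= 1).
  { destruct (Rle_lt_dec 1 (Gp u)) as [h2|h2]; [lra|].
    destruct HGp as [_ [_ [_ Hu]]].
    destruct (Hu (1 - Gp u)) as [M HM]; [lra|].
    set (b := Rmax (u+1) M).
    assert (u < b) by (unfold b; pose proof (Rmax_l (u+1) M); lra).
    assert (1 - Gp b < 1 - Gp u) by (apply HM; unfold b; pose proof (Rmax_r (u+1) M); lra).
    destruct (Hllr u b) as [_ Hq]; auto.
    pose proof (Gm1 b). pose proof (exp_pos b).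
    assert (exp b * (Gm b - Gm u) <= 0).
    { assert (Gm b - Gm u <= 0) by lra. nra. }
    lra. }
  destruct (Hunb u). lra.
Qed.

Lemma L7 u : 0 < 1 - Gp u.
Proof. pose proof (L3 u). pose proof (L6 u). pose proof (exp_pos u).
  assert (0 < exp u * (1 - Gm u)) by (apply Rmult_lt_0_compat; lra). lra. Qed.

Lemma L8 w : 0 < Gm w.
Proof.
  pose proof (Gm0 w). destruct (Rle_lt_dec (Gm w) 0) as [h|h]; auto. exfalso.
  pose proof (L4 w). pose proof (Gp0 w).
  assert (Gm w = 0) by lra. rewrite H2 in H0. rewrite Rmult_0_r in H0.
  destruct (Hunb (-w)) as [_ Hs]. rewrite Ropp_involutive in Hs. lra.
Qed.

End S.

Section S2.
Variables (Gp Gm : R -> R).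
Hypotheses (HGp : is_cdf Gp) (HGm : is_cdf Gm) (Hllr : llr_pair Gp Gm) (Hunb : unbounded_signals Gp Gm).
Let F x := x + Dplus Gp Gm x.

Lemma FA x : 0 <= F x.
Proof.
  unfold F, Dplus.
  pose proof (L3 Gp Gm HGp HGm Hllr Hunb (-x)).
  pose proof (L6 Gp Gm HGp HGm Hllr Hunb (-x)).
  pose proof (L7 Gp Gm HGp HGm Hllr Hunb (-x)).
  assert (exp (-x) <= (1 - Gp (-x)) / (1 - Gm (-x))) by (apply ratio_ge; auto).
  assert (ln (exp (-x)) <= ln ((1 - Gp (-x)) / (1 - Gm (-x)))) by (apply ln_le'; auto; apply exp_pos).
  rewrite ln_exp in H3. lra.
Qed.

Lemma FB x : x <= F x.
Proof.
  unfold F, Dplus.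
  pose proof (L5 Gp Gm HGp HGm Hllr Hunb (-x)).
  pose proof (L6 Gp Gm HGp HGm Hllr Hunb (-x)).
  assert (1 <= (1 - Gp (-x)) / (1 - Gm (-x))) by (apply ratio_ge; lra).
  assert (ln 1 <= ln ((1 - Gp (-x)) / (1 - Gm (-x)))) by (apply ln_le'; lra).
  rewrite ln_1 in H2. lra.
Qed.

Lemma FC C : exists d, d > 0 /\ forall x, 0 <= x <= C -> x + d <= F x.
Proof.
  set (w := - C - 1).
  pose proof (L8 Gp Gm HGp HGm Hllr Hunb w) as Hw.
  assert (Hew : exp w < exp (-C)) by (apply exp_increasing; unfold w; lra).
  set (eta := (exp (-C) - exp w) * Gm w).
  assert (Heta : 0 < eta) by (apply Rmult_lt_0_compat; lra).
  exists (ln (1 + eta)). split.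
  { rewrite <- ln_1. apply ln_increasing; lra. }
  intros x Hx. unfold F, Dplus. set (u := -x).
  assert (Hwu : w < u) by (unfold u, w; lra).
  pose proof (L4 Gp Gm HGp HGm Hllr Hunb w).
  destruct (Hllr w u Hwu) as [_ Hq].
  assert (Heu1 : exp u <= 1) by (rewrite <- exp_0; apply exp_le'; unfold u; lra).
  assert (Heu2 : exp (-C) <= exp u) by (apply exp_le'; unfold u; lra).
  pose proof (Gm0 Gp Gm HGp HGm Hunb u).
  pose proof (Gm1 Gp Gm HGp HGm Hunb u).
  assert (Hh : eta <= Gm u - Gp u).
  { unfold eta.
    assert (0 <= (1 - exp u) * Gm u) by (apply Rmult_le_pos; lra).
    assert ((exp (-C) - exp w) * Gm w <= (exp u - exp w) * Gm w) by (apply Rmult_le_compat_r; lra).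
    nra. }
  pose proof (L6 Gp Gm HGp HGm Hllr Hunb u).
  assert (1 + eta <= (1 - Gp u) / (1 - Gm u)) by (apply ratio_ge; nra).
  assert (ln (1 + eta) <= ln ((1 - Gp u) / (1 - Gm u))) by (apply ln_le'; lra).
  lra.
Qed.

Lemma FD : left_tail_convex_differentiable Gm ->
  exists K, 0 <= K /\ forall x x', K <= x -> x <= x' -> F x <= F x'.
Proof.
  intros [x0 [Hconv _]].
  set (w := x0 - 1).
  pose proof (L6 Gp Gm HGp HGm Hllr Hunb w) as Hw.
  set (K := Rmax 0 (1 - w + / (1 - Gm w))).
  exists K. split; [apply Rmax_l|].
  intros x x' HK Hxx'.
  assert (HK2 : 1 - w + / (1 - Gm w) <= x) by (pose proof (Rmax_r 0 (1 - w + / (1 - Gm w))); unfold K in HK; lra).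
  set (u := -x). set (u' := -x').
  assert (Hiw : 0 < / (1 - Gm w)) by (apply Rinv_0_lt_compat; auto).
  assert (Huw : u < w) by (unfold u; lra).
  assert (Huu : u' <= u) by (unfold u, u'; lra).
  pose proof (Gmmono Gm HGm u w (Rlt_le _ _ Huw)).
  pose proof (Gm0 Gp Gm HGp HGm Hunb u).
  pose proof (Gm1 Gp Gm HGp HGm Hunb u).
  pose proof (Gm0 Gp Gm HGp HGm Hunb w).
  pose proof (Gm1 Gp Gm HGp HGm Hunb w).
  pose proof (Gm0 Gp Gm HGp HGm Hunb u').
  assert (Hprod : 1 <= (w - u) * (1 - Gm u)).
  { assert (/ (1 - Gm w) <= w - u) by (unfold u; lra).
    assert (/ (1 - Gm w) * (1 - Gm w) <= (w - u) * (1 - Gm u)) by (apply Rmult_le_compat; lra).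
    rewrite Rinv_l in H6; lra. }
  assert (Hkey : Gm u - Gm u' <= (u - u') * (1 - Gm u)).
  { destruct (Rle_lt_or_eq_dec _ _ Huu) as [Hlt|Heq]; [|rewrite Heq; lra].
    set (lam := (w - u) / (w - u')).
    assert (Hl1 : lam * (w - u') = w - u) by (unfold lam; field; lra).
    assert (0 <= lam <= 1).
    { split; unfold lam.
      - left; apply Rdiv_lt_0_compat; lra.
      - apply ratio_le; lra. }
    assert (Hpt : lam * u' + (1 - lam) * w = u) by (unfold lam; field; lra).
    pose proof (Hconv u' w lam ltac:(unfold w in *; lra) ltac:(unfold w in *; lra) H5) as Hc.
    rewrite Hpt in Hc.
    assert (Hc2 : (w - u') * Gm u <= (w - u') * (lam * Gm u' + (1 - lam) * Gm w))
      by (apply Rmult_le_compat_l; lra).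
    assert (Hc3 : (w - u) * (Gm u - Gm u') <= (u - u') * (Gm w - Gm u)) by nra.
    assert (Hc4 : (w - u) * (Gm u - Gm u') <= (w - u) * ((u - u') * (1 - Gm u))) by nra.
    apply Rmult_le_reg_l in Hc4; lra. }
  unfold F, Dplus. fold u u'.
  pose proof (L6 Gp Gm HGp HGm Hllr Hunb u) as B1.
  pose proof (L6 Gp Gm HGp HGm Hllr Hunb u') as B2.
  pose proof (L7 Gp Gm HGp HGm Hllr Hunb u) as A1.
  pose proof (L7 Gp Gm HGp HGm Hllr Hunb u') as A2.
  rewrite !ln_div' by lra.
  assert (ln (1 - Gp u) <= ln (1 - Gp u')) by (apply ln_le'; auto; pose proof (Gpmono Gp HGp u' u Huu); lra).
  assert (ln (1 - Gm u') - ln (1 - Gm u) <= x' - x).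
  { rewrite <- ln_div' by lra.
    pose proof (ln_le_m1 ((1 - Gm u') / (1 - Gm u)) ltac:(apply Rdiv_lt_0_compat; lra)).
    assert ((1 - Gm u') / (1 - Gm u) <= 1 + (x' - x)) by (apply ratio_le; unfold u, u' in *; nra).
    lra. }
  lra.
Qed.
End S2.

Lemma nat_unb r : exists n : nat, r <= INR n.
Proof.
  destruct (archimed r) as [H1 _].
  destruct (Z.le_gt_cases (up r) 0) as [h|h].
  - exists 0%nat. simpl. apply IZR_le in h. lra.
  - exists (Z.to_nat (up r)). rewrite INR_IZR_INZ, Znat.Z2Nat.id by lia. lra.
Qed.

Fixpoint it (F : R -> R) (n : nat) (v : R) : R :=
  match n with O => v | S m => F (it F m v) end.

Lemma it_shift F n v : it F n (F v) = it F (S n) v.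
Proof. induction n; simpl; auto. rewrite IHn; auto. Qed.

Lemma it_mono F : (forall x, x <= F x) -> forall m n v, (m <= n)%nat -> it F m v <= it F n v.
Proof.
  intros HB m n v Hmn. induction Hmn; [lra|]. simpl. specialize (HB (it F m0 v)). lra.
Qed.

Lemma it_grow F C d : (forall x, x <= F x) -> (forall x, 0 <= x <= C -> x + d <= F x) ->
  forall v, 0 <= v -> forall n, C <= it F n v \/ INR n * d <= it F n v.
Proof.
  intros HB HC v Hv n. induction n.
  - right; simpl; lra.
  - pose proof (it_mono F HB 0 n v ltac:(lia)) as H0. simpl in H0.
    simpl it. destruct (Rle_lt_dec C (it F n v)) as [h|h].
    + left. specialize (HB (it F n v)). lra.
    + destruct IHn as [h2|h2]; [lra|]. right. rewrite S_INR.
      specialize (HC (it F n v) ltac:(lra)). lra.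
Qed.

Lemma it_reach F C d : (forall x, x <= F x) -> (forall x, 0 <= x <= C -> x + d <= F x) -> d > 0 ->
  exists n, forall v, 0 <= v -> C <= it F n v.
Proof.
  intros HB HC Hd. destruct (nat_unb (C / d)) as [n Hn]. exists n. intros v Hv.
  destruct (it_grow F C d HB HC v Hv n) as [h|h]; auto.
  assert (C <= INR n * d).
  { replace C with (C / d * d) by (field; lra). apply Rmult_le_compat_r; lra. }
  lra.
Qed.

Lemma main_it F K : (forall x, 0 <= F x) -> (forall x, x <= F x) ->
  (forall C, exists d, d > 0 /\ forall x, 0 <= x <= C -> x + d <= F x) ->
  (forall x x', K <= x -> x <= x' -> F x <= F x') ->
  exists P : nat, (1 <= P)%nat /\ forall x0 s, (1 <= s)%nat -> it F (s - P - 1) 0 <= it F s x0.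
Proof.
  intros HA HB HC HD.
  destruct (HC K) as [d [Hd Hd2]].
  destruct (it_reach F K d HB Hd2 Hd) as [N HN].
  set (yN := it F N 0).
  assert (HyN : K <= yN) by (apply HN; lra).
  destruct (HC yN) as [d' [Hd' Hd'2]].
  destruct (it_reach F yN d' HB Hd'2 Hd') as [P' HP'].
  exists (S P'). split; [lia|]. intros x0 s Hs.
  assert (HxP : yN <= it F (S P') x0) by (rewrite <- it_shift; apply HP'; apply HA).
  assert (Hsmall : forall s, (S P' <= s)%nat -> yN <= it F s x0).
  { intros s0 Hs0. pose proof (it_mono F HB _ _ x0 Hs0). lra. }
  assert (Hbig : forall k, it F (N + k) 0 <= it F (S P' + 1 + (N + k)) x0).
  { induction k.
    - rewrite Nat.add_0_r. apply Hsmall. lia.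
    - replace (N + S k)%nat with (S (N + k)) by lia.
      replace (S P' + 1 + S (N + k))%nat with (S (S P' + 1 + (N + k))) by lia.
      simpl it. apply HD; auto.
      pose proof (it_mono F HB N (N + k) 0 ltac:(lia)). fold yN in H. lra. }
  destruct (Compare_dec.le_lt_dec s (S P')) as [h|h].
  - replace (s - S P' - 1)%nat with 0%nat by lia. simpl.
    destruct s; [lia|]. simpl. apply HA.
  - destruct (Compare_dec.le_lt_dec (s - S P' - 1) N) as [h2|h2].
    + pose proof (it_mono F HB _ _ 0 h2). fold yN in H.
      pose proof (Hsmall s ltac:(lia)). lra.
    + specialize (Hbig (s - S P' - 1 - N)%nat).
      replace (N + (s - S P' - 1 - N))%nat with (s - S P' - 1)%nat in Hbig by lia.
      replace (S P' + 1 + (s - S P' - 1))%nat with s in Hbig by lia. exact Hbig.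
Qed.

Lemma ell_true_it Gp Gm n :
  ell_aux Gp Gm (fun _ => true) n = it (fun x => x + Dplus Gp Gm x) n 0.
Proof. induction n; simpl; auto. rewrite IHn; auto. Qed.

Lemma ell_a_it Gp Gm (a : nat -> bool) t s :
  (1 <= t)%nat -> (forall k : nat, (t <= k <= t + s - 1)%nat -> a k = true) ->
  forall j, (j <= s)%nat ->
  ell_aux Gp Gm a (t - 1 + j) = it (fun x => x + Dplus Gp Gm x) j (ell_aux Gp Gm a (t - 1)).
Proof.
  intros Ht Ha j. induction j; intros Hj.
  - rewrite Nat.add_0_r; auto.
  - replace (t - 1 + S j)%nat with (S (t - 1 + j)) by lia.
    simpl ell_aux. rewrite Ha by lia. rewrite IHj by lia. reflexivity.
Qed.

Theorem lemma8 (Gp Gm : R -> R)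
  (HGp : is_cdf Gp) (HGm : is_cdf Gm)
  (Hllr : llr_pair Gp Gm)
  (Hunb : unbounded_signals Gp Gm)
  (Htail : left_tail_convex_differentiable Gm) :
  exists z : nat, (1 <= z)%nat /\
    forall (a : nat -> bool) (t s : nat),
      (1 <= t)%nat -> (1 <= s)%nat ->
      (forall k : nat, (t <= k <= t + s - 1)%nat -> a k = true) ->
      ell_star Gp Gm (s - z) <= ell Gp Gm a (t + s).
Proof.
  destruct (FD Gp Gm HGp HGm Hllr Hunb Htail) as [K [_ HK]].
  destruct (main_it (fun x => x + Dplus Gp Gm x) K
    (FA Gp Gm HGp HGm Hllr Hunb) (FB Gp Gm HGp HGm Hllr Hunb)
    (FC Gp Gm HGp HGm Hllr Hunb) HK) as [P [HP Hit]].
  exists P. split; auto. intros a t s Ht Hs Ha.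
  unfold ell_star, ell. rewrite ell_true_it.
  replace (t + s - 1)%nat with (t - 1 + s)%nat by lia.
  rewrite (ell_a_it Gp Gm a t s Ht Ha s) by lia.
  replace (s - P - 1)%nat with (s - P - 1)%nat by lia.
  apply Hit; auto.
Qed.
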